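(* The functor $\partial\mathrm{Gelf}\colon\mathsf{C^*}^{\mathrm{op}}\to\mathsf{Set}$, together with the identity natural transformation $\partial\mathrm{Gelf}|_{\mathsf{CommC^*}^{\mathrm{op}}}\to\operatorname{Gelf}$, is the right Kan extension of $\operatorname{Gelf}\colon\mathsf{CommC^*}^{\mathrm{op}}\to\mathsf{Set}$ along the inclusion $\mathsf{CommC^*}^{\mathrm{op}}\subseteq\mathsf{C^*}^{\mathrm{op}}$: for every functor $F\colon\mathsf{C^*}^{\mathrm{op}}\to\mathsf{Set}$ and natural transformation $\eta\colon F|_{\mathsf{CommC^*}^{\mathrm{op}}}\to\operatorname{Gelf}$ there is a unique natural transformation $\delta\colon F\to\partial\mathrm{Gelf}$ whose restriction to $\mathsf{CommC^*}^{\mathrm{op}}$ is $\eta$. In particular, $\partial\mathrm{Gelf}$ is a terminal object of the category $r^{-1}(\operatorname{Gelf})$.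
   Context: $\mathsf{C^*}$ is the category of unital $C^*$-algebras with identity-preserving $*$-homomorphisms, and $\mathsf{CommC^*}$ its full subcategory of commutative ones. $\operatorname{Gelf}(A)$ is the set of maximal ideals of a commutative unital $C^*$-algebra $A$, with $\operatorname{Gelf}(f)(M)=f^{-1}(M)$. For a unital $C^*$-algebra $A$, let $N(A)=\{a\in A: aa^*=a^*a\}$. A partial maximal ideal of $A$ is a subset $I\subseteq N(A)$ such that for every commutative $C^*$-subalgebra $C\subseteq A$ (closed, $*$-invariant, containing $1$), $I\cap C$ is a maximal ideal of $C$. $\partial\mathrm{Gelf}(A)$ is the set of partial maximal ideals of $A$, and for a morphism $f\colon A\to B$, $\partial\mathrm{Gelf}(f)(M)=f^{-1}(M)\cap N(A)$; on commutative algebras $\partial\mathrm{Gelf}=\operatorname{Gelf}$. The category $r^{-1}(\operatorname{Gelf})$ has objects pairs $(F,\phi)$ with $F\colon\mathsf{C^*}^{\mathrm{op}}\to\mathsf{Set}$ and $\phi\colon F|_{\mathsf{CommC^*}^{\mathrm{op}}}\to\operatorname{Gelf}$ a natural isomorphism; morphisms $(F,\phi)\to(F',\phi')$ are natural transformations $\psi\colon F\to F'$ with $\phi'\circ\psi|_{\mathsf{CommC^*}^{\mathrm{op}}}=\phi$. *)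

(* Defs.v *)
From HB Require Import structures.
From mathcomp Require Import all_boot all_order all_algebra complex.
From mathcomp Require Import boolp classical_sets reals.
Set Implicit Arguments. Unset Strict Implicit. Unset Printing Implicit Defensive.
Import Order.TTheory GRing.Theory Num.Theory.
Local Open Scope ring_scope.
Local Open Scope classical_set_scope.

(* The zero algebra (1 = 0) is allowed, as in the category C*.                *)
Record cstar (R : realType) := CStar {
  car :> lmodType R[i];
  cmul : car -> car -> car;
  cone : car;
  cinv : car -> car;             (* the involution x |-> x^* *)
  cnorm : car -> R;
  cmulA : forall x y z, cmul x (cmul y z) = cmul (cmul x y) z;
  cmul1l : forall x, cmul cone x = x;
  cmul1r : forall x, cmul x cone = x;
  cmulDl : forall x y z, cmul (x + y) z = cmul x z + cmul y z;
  cmulDr : forall x y z, cmul x (y + z) = cmul x y + cmul x z;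
  cmulZl : forall (c : R[i]) x y, cmul (c *: x) y = c *: cmul x y;
  cmulZr : forall (c : R[i]) x y, cmul x (c *: y) = c *: cmul x y;
  cinvD : forall x y, cinv (x + y) = cinv x + cinv y;
  cinvZ : forall (c : R[i]) x, cinv (c *: x) = c^* *: cinv x;
  cinvK : forall x, cinv (cinv x) = x;
  cinvM : forall x y, cinv (cmul x y) = cmul (cinv y) (cinv x);
  cnorm_eq0 : forall x, cnorm x = 0 -> x = 0;
  cnormD : forall x y, cnorm (x + y) <= cnorm x + cnorm y;
  cnormZ : forall (c : R[i]) x, cnorm (c *: x) = Normc.normc c * cnorm x;
  cnormM : forall x y, cnorm (cmul x y) <= cnorm x * cnorm y;
  cnorm_cstar : forall x, cnorm (cmul (cinv x) x) = cnorm x ^+ 2;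
  ccomplete : forall u : nat -> car,
    (forall e : R, 0 < e -> exists N, forall m n, (N <= m)%N -> (N <= n)%N ->
        cnorm (u m - u n) < e) ->
    exists l, forall e : R, 0 < e -> exists N, forall n, (N <= n)%N ->
        cnorm (u n - l) < e
}.

Section CStarDefs.
Context {R : realType}.

Definition is_chom (A B : cstar R) (f : A -> B) : Prop :=
  [/\ (forall x y, f (x + y) = f x + f y),
      (forall (c : R[i]) x, f (c *: x) = c *: f x),
      (forall x y, f (cmul x y) = cmul (f x) (f y)),
      f (cone A) = cone B &
      (forall x, f (cinv x) = cinv (f x))].

Definition chom (A B : cstar R) := {f : A -> B | is_chom f}.

Definition chom_fun (A B : cstar R) (f : chom A B) : A -> B := proj1_sig f.

Lemma is_chom_id (A : cstar R) : is_chom (@id A).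
Proof. by split. Qed.

Definition chom_id (A : cstar R) : chom A A := exist _ (@id A) (is_chom_id A).

Lemma is_chom_comp (A B C : cstar R) (g : chom B C) (f : chom A B) :
  is_chom (chom_fun g \o chom_fun f).
Proof.
case: g => g [g1 g2 g3 g4 g5]; case: f => f [f1 f2 f3 f4 f5]; split => /=.
- by move=> x y; rewrite f1 g1.
- by move=> c x; rewrite f2 g2.
- by move=> x y; rewrite f3 g3.
- by rewrite f4 g4.
- by move=> x; rewrite f5 g5.
Qed.

Definition chom_comp (A B C : cstar R) (g : chom B C) (f : chom A B) : chom A C :=
  exist _ (chom_fun g \o chom_fun f) (is_chom_comp g f).

Definition ccommutative (A : cstar R) : Prop := forall x y : A, cmul x y = cmul y x.

Definition normal_elts (A : cstar R) : set A :=
  [set a | cmul a (cinv a) = cmul (cinv a) a].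

Definition comm_subalg (A : cstar R) (C : set A) : Prop :=
  C (cone A) /\
  (forall x y, C x -> C y -> C (x + y)) /\
  (forall (c : R[i]) x, C x -> C (c *: x)) /\
  (forall x y, C x -> C y -> C (cmul x y)) /\
  (forall x, C x -> C (cinv x)) /\
  (forall (u : nat -> A) l, (forall n, C (u n)) ->
     (forall e : R, 0 < e -> exists N, forall n, (N <= n)%N -> cnorm (u n - l) < e) ->
     C l) /\
  (forall x y, C x -> C y -> cmul x y = cmul y x).

Definition is_ideal_of (A : cstar R) (C : set A) (I : set A) : Prop :=
  [/\ I `<=` C, I 0,
      (forall x y, I x -> I y -> I (x - y)),
      (forall c x, C c -> I x -> I (cmul c x)) &
      (forall c x, C c -> I x -> I (cmul x c))].

Definition is_max_ideal_of (A : cstar R) (C : set A) (M : set A) : Prop :=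
  [/\ is_ideal_of C M, M <> C &
      (forall J, is_ideal_of C J -> M `<=` J -> J = M \/ J = C)].

Definition is_max_ideal (A : cstar R) (M : set A) : Prop :=
  is_max_ideal_of [set: A] M.

Definition is_partial_max_ideal (A : cstar R) (I : set A) : Prop :=
  I `<=` @normal_elts A /\
  forall C : set A, comm_subalg C -> is_max_ideal_of C (I `&` C).

Record cfunctor := CFunctor {
  Fobj : cstar R -> Type;
  Fmap : forall A B : cstar R, chom A B -> Fobj B -> Fobj A;
  Fmap_id : forall (A : cstar R) (x : Fobj A), Fmap (chom_id A) x = x;
  Fmap_comp : forall (A B C : cstar R) (f : chom A B) (g : chom B C) (x : Fobj C),
      Fmap (chom_comp g f) x = Fmap f (Fmap g x)
}.

Definition nat_to_Gelf (F : cfunctor)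
    (eta : forall A : cstar R, ccommutative A -> Fobj F A -> {M : set A | is_max_ideal M})
    : Prop :=
  forall (A B : cstar R) (hA : ccommutative A) (hB : ccommutative B)
         (f : chom A B) (y : Fobj F B),
    proj1_sig (eta A hA (Fmap f y)) = chom_fun f @^-1` proj1_sig (eta B hB y).

(* natural transformations F -> dGelf, where
   dGelf(f)(M) = f^{-1}(M) intersected with N(A) *)
Definition nat_to_dGelf (F : cfunctor)
    (delta : forall A : cstar R, Fobj F A -> {I : set A | is_partial_max_ideal I})
    : Prop :=
  forall (A B : cstar R) (f : chom A B) (y : Fobj F B),
    proj1_sig (delta A (Fmap f y)) =
      (chom_fun f @^-1` proj1_sig (delta B y)) `&` @normal_elts A.

End CStarDefs.

(* Main.v *)
Require Import Defs.
From HB Require Import structures.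
From mathcomp Require Import all_boot all_order all_algebra complex.
From mathcomp Require Import boolp classical_sets reals.
From mathcomp Require Import lra.
Set Implicit Arguments. Unset Strict Implicit. Unset Printing Implicit Defensive.
Import Order.TTheory GRing.Theory Num.Theory.
Local Open Scope ring_scope.
Local Open Scope classical_set_scope.

Section Sub.
Context {R : realType} (A : cstar R) (C : set A) (hC : comm_subalg C).

Definition subT := {x : A | C x}.
HB.instance Definition _ := gen_eqMixin subT.
HB.instance Definition _ := gen_choiceMixin subT.

Lemma sval_inj (x y : subT) : proj1_sig x = proj1_sig y -> x = y.
Proof. case: x => x hx; case: y => y hy /= exy; subst y; congr exist; exact: Prop_irrelevance. Qed.

Let C1 : C (cone A). Proof. by case: hC. Qed.
Let CD : forall x y, C x -> C y -> C (x + y). Proof. by case: hC => _ []. Qed.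
Let CZ : forall (c : R[i]) x, C x -> C (c *: x). Proof. by case: hC => _ [] _ []. Qed.
Let CM : forall x y, C x -> C y -> C (cmul x y). Proof. by case: hC => _ [] _ [] _ []. Qed.
Let CI : forall x, C x -> C (cinv x). Proof. by case: hC => _ [] _ [] _ [] _ []. Qed.
Let Clim : forall (u : nat -> A) l, (forall n, C (u n)) ->
     (forall e : R, 0 < e -> exists N, forall n, (N <= n)%N -> cnorm (u n - l) < e) ->
     C l. Proof. by case: hC => _ [] _ [] _ [] _ [] _ []. Qed.
Let Ccomm : forall x y, C x -> C y -> cmul x y = cmul y x.
Proof. by case: hC => _ [] _ [] _ [] _ [] _ []. Qed.

Let C0 : C 0. Proof. by rewrite -(scale0r (cone A)); apply: CZ. Qed.
Let CN : forall x, C x -> C (- x). Proof. by move=> x hx; rewrite -scaleN1r; apply: CZ. Qed.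

Definition s0 : subT := exist _ 0 C0.
Definition sopp (x : subT) : subT := exist _ (- proj1_sig x) (CN (proj2_sig x)).
Definition sadd (x y : subT) : subT := exist _ (proj1_sig x + proj1_sig y) (CD (proj2_sig x) (proj2_sig y)).
Definition sscale (c : R[i]) (x : subT) : subT := exist _ (c *: proj1_sig x) (CZ c (proj2_sig x)).
Definition smul (x y : subT) : subT := exist _ (cmul (proj1_sig x) (proj1_sig y)) (CM (proj2_sig x) (proj2_sig y)).
Definition sone : subT := exist _ (cone A) C1.
Definition sinv (x : subT) : subT := exist _ (cinv (proj1_sig x)) (CI (proj2_sig x)).
Definition snorm (x : subT) : R := cnorm (proj1_sig x).

Lemma saddA : associative sadd. Proof. by move=> *; apply: sval_inj; rewrite /= addrA. Qed.
Lemma saddC : commutative sadd. Proof. by move=> *; apply: sval_inj; rewrite /= addrC. Qed.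
Lemma sadd0 : left_id s0 sadd. Proof. by move=> *; apply: sval_inj; rewrite /= add0r. Qed.
Lemma saddN : left_inverse s0 sopp sadd. Proof. by move=> *; apply: sval_inj; rewrite /= addNr. Qed.
HB.instance Definition _ := GRing.isZmodule.Build subT saddA saddC sadd0 saddN.

Lemma sscaleA a b v : sscale a (sscale b v) = sscale (a * b) v.
Proof. by apply: sval_inj; rewrite /= scalerA. Qed.
Lemma sscale1 : left_id 1 sscale. Proof. by move=> *; apply: sval_inj; rewrite /= scale1r. Qed.
Lemma sscaleDr : right_distributive sscale +%R.
Proof. by move=> *; apply: sval_inj; rewrite /= scalerDr. Qed.
Lemma sscaleDl v : {morph sscale^~ v: a b / a + b}.
Proof. by move=> *; apply: sval_inj; rewrite /= scalerDl. Qed.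
HB.instance Definition _ := GRing.Zmodule_isLmodule.Build R[i] subT sscaleA sscale1 sscaleDr sscaleDl.

Definition subC : cstar R.
refine (@CStar R subT smul sone sinv snorm _ _ _ _ _ _ _ _ _ _ _ _ _ _ _ _ _).
- by move=> *; apply: sval_inj; rewrite /= cmulA.
- by move=> *; apply: sval_inj; rewrite /= cmul1l.
- by move=> *; apply: sval_inj; rewrite /= cmul1r.
- by move=> *; apply: sval_inj; rewrite /= cmulDl.
- by move=> *; apply: sval_inj; rewrite /= cmulDr.
- by move=> *; apply: sval_inj; rewrite /= cmulZl.
- by move=> *; apply: sval_inj; rewrite /= cmulZr.
- by move=> *; apply: sval_inj; rewrite /= cinvD.
- by move=> *; apply: sval_inj; rewrite /= cinvZ.
- by move=> *; apply: sval_inj; rewrite /= cinvK.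
- by move=> *; apply: sval_inj; rewrite /= cinvM.
- by move=> x /cnorm_eq0 h; apply: sval_inj; rewrite h.
- by move=> x y; apply: cnormD.
- by move=> c x; apply: cnormZ.
- by move=> x y; apply: cnormM.
- by move=> x; apply: cnorm_cstar.
- move=> u hu.
  have [l hl] := ccomplete (u := fun n => proj1_sig (u n)) hu.
  have Cl : C l by apply: (Clim (u := fun n => proj1_sig (u n))) => // n; exact: proj2_sig.
  by exists (exist _ l Cl).
Defined.

Lemma subC_comm : ccommutative subC.
Proof. by move=> x y; apply: sval_inj; apply: Ccomm; exact: proj2_sig. Qed.

Lemma incl_is_chom : is_chom (fun x : subC => proj1_sig x).
Proof. by split. Qed.
Definition incl : chom subC A := exist _ _ incl_is_chom.
End Sub.


Section Norm.
Context {R : realType} (A : cstar R).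
Implicit Types x y : A.

Lemma normc_ge0 (c : R[i]) : 0 <= Normc.normc c.
Proof. by case: c => a b; rewrite /Normc.normc Num.Theory.sqrtr_ge0. Qed.

Lemma normcN1 : Normc.normc (-1 : R[i]) = 1.
Proof. rewrite /Normc.normc /= oppr0 sqrrN expr1n expr0n /= mulr0n -[RHS]sqrtr1; congr Num.ExtraDef.sqrtr; lra. Qed.

Lemma cnorm0 : cnorm (0 : A) = 0.
Proof. by rewrite -(scale0r (0 : A)) cnormZ Normc.normc0 mul0r. Qed.

Lemma cnormN x : cnorm (- x) = cnorm x.
Proof. by rewrite -scaleN1r cnormZ normcN1 mul1r. Qed.

Lemma cnorm_ge0 x : 0 <= cnorm x.
Proof.
have := cnormD x (- x); rewrite subrr cnorm0 cnormN => h.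
by rewrite -(@pmulr_rge0 _ 2) //; lra.
Qed.

Lemma cnormB x y : cnorm (x - y) = cnorm (y - x).
Proof. by rewrite -cnormN opprB. Qed.

Lemma cinv0 : cinv (0 : A) = 0.
Proof. have h := cinvD (0:A) 0; rewrite addr0 in h; by apply: (@addrI _ (cinv (0:A))); rewrite addr0 -h. Qed.

Lemma cinvN x : cinv (- x) = - cinv x.
Proof. by apply/eqP; rewrite -subr_eq0 opprK -cinvD addNr cinv0. Qed.

Lemma cinvB x y : cinv (x - y) = cinv x - cinv y.
Proof. by rewrite cinvD cinvN. Qed.

Lemma cnorm_inv_le x : cnorm x <= cnorm (cinv x).
Proof.
have [x0|xn0] := eqVneq (cnorm x) 0; first by rewrite x0 cnorm_ge0.
have := cnormM (cinv x) x; rewrite cnorm_cstar expr2 => h.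
have hp : 0 < cnorm x by rewrite lt_def xn0 cnorm_ge0.
by rewrite -(ler_pM2r hp).
Qed.

Lemma cnorm_inv x : cnorm (cinv x) = cnorm x.
Proof.
apply/le_anti; rewrite cnorm_inv_le andbT.
by have := cnorm_inv_le (cinv x); rewrite cinvK.
Qed.

Lemma cnorm_le0 x : (forall e : R, 0 < e -> cnorm x < e) -> x = 0.
Proof.
move=> h; apply: cnorm_eq0; apply/le_anti; rewrite cnorm_ge0 andbT.
apply/negPn/negP; rewrite -ltNge => hp.
by have := h _ hp; rewrite ltxx.
Qed.

Lemma cnorm_tri x y z : cnorm (x - z) <= cnorm (x - y) + cnorm (y - z).
Proof. have -> : x - z = (x - y) + (y - z) by rewrite addrA subrK. exact: cnormD. Qed.
End Norm.

Section Closure.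
Context {R : realType} (A : cstar R).
Implicit Types x y : A.

Lemma cmulNl x y : cmul (- x) y = - cmul x y.
Proof. by rewrite -scaleN1r cmulZl scaleN1r. Qed.
Lemma cmulNr x y : cmul x (- y) = - cmul x y.
Proof. by rewrite -scaleN1r cmulZr scaleN1r. Qed.
Lemma cmulBl x y z : cmul (x - y) z = cmul x z - cmul y z.
Proof. by rewrite cmulDl cmulNl. Qed.
Lemma cmulBr x y z : cmul z (x - y) = cmul z x - cmul z y.
Proof. by rewrite cmulDr cmulNr. Qed.

Definition alg_sub (S : set A) : Prop :=
  S (cone A) /\
  (forall x y, S x -> S y -> S (x + y)) /\
  (forall (c : R[i]) x, S x -> S (c *: x)) /\
  (forall x y, S x -> S y -> S (cmul x y)) /\
  (forall x, S x -> S (cinv x)) /\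
  (forall x y, S x -> S y -> cmul x y = cmul y x).

Definition clo (S : set A) : set A :=
  [set l | forall e : R, 0 < e -> exists2 s, S s & cnorm (s - l) < e].

Lemma sub_clo S : S `<=` clo S.
Proof. by move=> x Sx e e0; exists x => //; rewrite subrr cnorm0. Qed.

Lemma approx_mul S x y : clo S x -> clo S y -> forall e : R, 0 < e ->
  exists s t, [/\ S s, S t, cnorm (cmul s t - cmul x y) < e &
                 cnorm (cmul t s - cmul y x) < e].
Proof.
move=> hx hy e e0.
have X0 := cnorm_ge0 x.
have hz1 : 0 < 2 * (cnorm x + 1) by lra.
have [t St ht] := hy _ (divr_gt0 e0 hz1).
have T0 := cnorm_ge0 t.
have hz2 : 0 < 2 * (cnorm t + 1) by lra.
have [s Ss hs] := hx _ (divr_gt0 e0 hz2).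
rewrite ltr_pdivlMr // in ht; rewrite ltr_pdivlMr // in hs.
have a0 := cnorm_ge0 (s - x); have b0 := cnorm_ge0 (t - y).
have h1 : cnorm (cmul (s - x) t) <= cnorm (s - x) * cnorm t by apply: cnormM.
have h2 : cnorm (cmul x (t - y)) <= cnorm x * cnorm (t - y) by apply: cnormM.
have h3 : cnorm (cmul t (s - x)) <= cnorm t * cnorm (s - x) by apply: cnormM.
have h4 : cnorm (cmul (t - y) x) <= cnorm (t - y) * cnorm x by apply: cnormM.
exists s, t; split => //.
- have -> : cmul s t - cmul x y = cmul (s - x) t + cmul x (t - y).
    by rewrite cmulBl cmulBr addrA subrK.
  apply: (le_lt_trans (cnormD _ _)); lra.
- have -> : cmul t s - cmul y x = cmul t (s - x) + cmul (t - y) x.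
    by rewrite cmulBl cmulBr addrA subrK.
  apply: (le_lt_trans (cnormD _ _)); lra.
Qed.

Lemma clo_comm_subalg S : alg_sub S -> comm_subalg (clo S).
Proof.
move=> [S1 [SD [SZ [SM [SI Scomm]]]]].
split; first exact: sub_clo.
split.
  move=> x y hx hy e e0.
  have [s Ss hs] := hx _ (divr_gt0 e0 (ltr0n _ 2)).
  have [t St ht] := hy _ (divr_gt0 e0 (ltr0n _ 2)).
  exists (s + t); first exact: SD.
  have -> : s + t - (x + y) = (s - x) + (t - y) by rewrite opprD addrACA.
  apply: (le_lt_trans (cnormD _ _)); lra.
split.
  move=> c x hx e e0.
  have n0 := normc_ge0 c.
  have hz : 0 < Normc.normc c + 1 by lra.
  have [s Ss hs] := hx _ (divr_gt0 e0 hz).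
  exists (c *: s); first exact: SZ.
  rewrite -scalerBr cnormZ; rewrite ltr_pdivlMr // in hs.
  have := cnorm_ge0 (s - x); lra.
split.
  move=> x y hx hy e e0.
  have [s [t [Ss St h1 _]]] := approx_mul hx hy e0.
  by exists (cmul s t) => //; apply: SM.
split.
  move=> x hx e e0; have [s Ss hs] := hx _ e0.
  by exists (cinv s); [apply: SI | rewrite -cinvB cnorm_inv].
split.
  move=> u l hu hl e e0.
  have [N hN] := hl _ (divr_gt0 e0 (ltr0n _ 2)).
  have [s Ss hs] := hu N _ (divr_gt0 e0 (ltr0n _ 2)).
  exists s => //.
  apply: (le_lt_trans (cnorm_tri _ (u N) _)).
  have := hN N (leqnn N); lra.
move=> x y hx hy; apply/eqP; rewrite -subr_eq0; apply/eqP; apply: cnorm_le0 => e e0.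
have [s [t [Ss St h1 h2]]] := approx_mul hx hy (divr_gt0 e0 (ltr0n _ 2)).
have -> : cmul x y - cmul y x = - (cmul s t - cmul x y) + (cmul t s - cmul y x).
  by rewrite (Scomm s t) // opprB addrA subrK.
apply: (le_lt_trans (cnormD _ _)); rewrite cnormN; lra.
Qed.
End Closure.


Section Gen.
Context {R : realType} (A : cstar R).
Implicit Types x y : A.

Definition subalg_closed (T : set A) : Prop :=
  T (cone A) /\
  (forall x y, T x -> T y -> T (x + y)) /\
  (forall (c : R[i]) x, T x -> T (c *: x)) /\
  (forall x y, T x -> T y -> T (cmul x y)) /\
  (forall x, T x -> T (cinv x)).

Definition gen (a : A) : set A := [set x | forall T, subalg_closed T -> T a -> T x].

Lemma gen_closed a : subalg_closed (gen a).
Proof.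
split; first by move=> T [].
split; first by move=> x y hx hy T hT Ta; case: (hT) => _ [hD _]; apply: hD; [apply: hx|apply: hy].
split; first by move=> c x hx T hT Ta; case: (hT) => _ [_ [hZ _]]; apply: hZ; apply: hx.
split; first by move=> x y hx hy T hT Ta; case: (hT) => _ [_ [_ [hM _]]]; apply: hM; [apply: hx|apply: hy].
by move=> x hx T hT Ta; case: (hT) => _ [_ [_ [_ hI]]]; apply: hI; apply: hx.
Qed.

Lemma gen_a a : gen a a.
Proof. by move=> T _. Qed.

Lemma gen_alg a : @normal_elts _ A a -> alg_sub (gen a).
Proof.
move=> na.
have [g1 [gD [gZ [gM gI]]]] := gen_closed a.
split => //; split => //; split => //; split => //; split => //.
pose Q : set A := [set y | cmul y a = cmul a y /\ cmul y (cinv a) = cmul (cinv a) y].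
have hQ : subalg_closed Q.
  split; first by rewrite /Q /= cmul1l cmul1r cmul1l cmul1r.
  split; first by move=> x y [h1 h2] [h3 h4]; rewrite /Q /= !cmulDl !cmulDr h1 h2 h3 h4.
  split; first by move=> c x [h1 h2]; rewrite /Q /= !cmulZl !cmulZr h1 h2.
  split; first by move=> x y [h1 h2] [h3 h4]; rewrite /Q /= -!cmulA h3 h4 !cmulA h1 h2.
  move=> x [h1 h2]; split.
    by have := congr1 (@cinv _ _) h2; rewrite !cinvM cinvK.
  by have := congr1 (@cinv _ _) h1; rewrite !cinvM.
have Qa : Q a by split => //; rewrite /normal_elts /= in na.
have genQ : gen a `<=` Q by move=> y hy; apply: hy.
pose P : set A := [set x | forall y, gen a y -> cmul x y = cmul y x].
have hP : subalg_closed P.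
  split; first by move=> y _; rewrite cmul1l cmul1r.
  split; first by move=> x y hx hy z hz; rewrite cmulDl cmulDr hx ?hy.
  split; first by move=> c x hx z hz; rewrite cmulZl cmulZr hx.
  split; first by move=> x y hx hy z hz; rewrite -cmulA hy // !cmulA hx.
  move=> x hx z hz.
  have := congr1 (@cinv _ _) (hx _ (gI _ hz)); rewrite !cinvM cinvK => ->.
  done.
have Pa : P a by move=> y /genQ [h1 _].
move=> x y hx hy; exact: (hx P hP Pa).
Qed.

Lemma normal_comm a : @normal_elts _ A a -> exists C, comm_subalg C /\ C a.
Proof.
move=> na; exists (clo (gen a)); split; first exact: clo_comm_subalg (gen_alg na).
by apply: sub_clo; exact: gen_a.
Qed.

Lemma comm_normal C a : comm_subalg C -> C a -> @normal_elts _ A a.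
Proof.
move=> [_ [_ [_ [_ [hI [_ hc]]]]]] Ca; rewrite /normal_elts /=.
by apply: hc => //; apply: hI.
Qed.

Lemma comm_subalgI (C D : set A) : comm_subalg C -> comm_subalg D -> @comm_subalg _ A (C `&` D).
Proof.
move=> [c1 [cD [cZ [cM [cI [cL cc]]]]]] [d1 [dD [dZ [dM [dI [dL dc]]]]]].
split; first by [].
split; first by move=> x y [] ? ? [] ? ?; split; [apply: cD|apply: dD].
split; first by move=> c x [] ? ?; split; [apply: cZ|apply: dZ].
split; first by move=> x y [] ? ? [] ? ?; split; [apply: cM|apply: dM].
split; first by move=> x [] ? ?; split; [apply: cI|apply: dI].
split; last by move=> x y [] ? ? [] ? ?; apply: cc.
move=> u l hu hl; split; [apply: (cL u) => // n; by case: (hu n)|apply: (dL u) => // n; by case: (hu n)].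
Qed.

Lemma comm_subalgT : ccommutative A -> @comm_subalg _ A [set: A].
Proof. by move=> hA; do 6 split => //. Qed.
End Gen.

Section Img.
Context {R : realType} (A B : cstar R) (f : chom A B).

Definition img (C : set A) : set B := [set b | exists2 c, C c & b = chom_fun f c].

Lemma img_alg C : comm_subalg C -> alg_sub (img C).
Proof.
have [g1 g2 g3 g4 g5] : is_chom (chom_fun f) := proj2_sig f.
move=> [c1 [cD [cZ [cM [cI [cL cc]]]]]].
split; first by exists (cone A); rewrite ?g4.
split; first by move=> x y [c hc ->] [d hd ->]; exists (c + d); [apply: cD|rewrite g1].
split; first by move=> k x [c hc ->]; exists (k *: c); [apply: cZ|rewrite g2].
split; first by move=> x y [c hc ->] [d hd ->]; exists (cmul c d); [apply: cM|rewrite g3].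
split; first by move=> x [c hc ->]; exists (cinv c); [apply: cI|rewrite g5].
by move=> x y [c hc ->] [d hd ->]; rewrite -!g3 cc.
Qed.
End Img.

Lemma chom_ext {R : realType} (A B : cstar R) (f g : chom A B) :
  (forall x, chom_fun f x = chom_fun g x) -> f = g.
Proof.
case: f => f hf; case: g => g hg /= h.
have fg : f = g by apply: funext.
subst g; congr exist; exact: Prop_irrelevance.
Qed.

Section Res.
Context {R : realType} (A B : cstar R) (f : chom A B) (C : set A) (D : set B)
  (hC : comm_subalg C) (hD : comm_subalg D) (hCD : forall c, C c -> D (chom_fun f c)).

Definition resf_fun (x : subC hC) : subC hD :=
  exist _ (chom_fun f (proj1_sig x)) (hCD (proj2_sig x)).

Lemma resf_is_chom : is_chom resf_fun.
Proof.
have [g1 g2 g3 g4 g5] : is_chom (chom_fun f) := proj2_sig f.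
split.
- by move=> x y; apply: sval_inj; rewrite /= g1.
- by move=> c x; apply: sval_inj; rewrite /= g2.
- by move=> x y; apply: sval_inj; rewrite /= g3.
- by apply: sval_inj; rewrite /= g4.
- by move=> x; apply: sval_inj; rewrite /= g5.
Qed.

Definition resf : chom (subC hC) (subC hD) := exist _ _ resf_is_chom.

Lemma resf_comp : chom_comp (incl hD) resf = chom_comp f (incl hC).
Proof. by apply: chom_ext. Qed.
End Res.

Section Transfer.
Context {R : realType} (A : cstar R) (C : set A) (hC : comm_subalg C).

Lemma inM_of (P : set (subC hC)) (s : subC hC) :
  P s -> exists h : C (proj1_sig s), P (exist _ (proj1_sig s) h).
Proof. by case: s => s hs Ps; exists hs. Qed.

Lemma max_transfer (M : set (subC hC)) : is_max_ideal M ->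
  is_max_ideal_of C [set a | exists h : C a, M (exist _ a h)].
Proof.
move=> [[_ M0 MB ML MR] MnT Mmax].
split.
- split.
  + by move=> a [].
  + by case: (inM_of M0) => h Mh; exists h.
  + move=> x y [hx Mx] [hy My].
    by case: (inM_of (MB _ _ Mx My)) => h Mh; exists h.
  + move=> c x Cc [hx Mx].
    by case: (inM_of (ML (exist C c Cc) _ I Mx)) => h Mh; exists h.
  + move=> c x Cc [hx Mx].
    by case: (inM_of (MR (exist C c Cc) _ I Mx)) => h Mh; exists h.
- move=> eqC; apply: MnT; apply/seteqP; split => // [[x hx]] _.
  have : [set a | exists h : C a, M (exist C a h)] x by rewrite eqC.
  move=> -[h Mh].
  by have <- : exist C x h = exist C x hx by apply: sval_inj.
- move=> J [JC J0 JB JL JR] sub.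
  pose J' : set (subC hC) := [set s | J (proj1_sig s)].
  have hJ' : is_ideal_of [set: subC hC] J'.
    split => //.
    + by move=> x y; apply: JB.
    + by move=> c x _ Jx; apply: JL => //; exact: proj2_sig.
    + by move=> c x _ Jx; apply: JR => //; exact: proj2_sig.
  have MJ : M `<=` J' by move=> [x hx] Mx; apply: sub; exists hx.
  case: (Mmax _ hJ' MJ) => e; [left|right].
  + apply/seteqP; split => x.
      move=> Jx; have hx := JC _ Jx; exists hx.
      by have : J' (exist C x hx) by []; rewrite e.
    by move=> [hx Mx]; apply: sub; exists hx.
  + apply/seteqP; split => x; first exact: JC.
    by move=> hx; have : J' (exist C x hx) by rewrite e.
Qed.
End Transfer.

Unset Implicit Arguments.

Section Main.
Context {R : realType} (F : @cfunctor R)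
  (eta : forall A : cstar R, ccommutative A -> Fobj F A -> {M : set A | is_max_ideal M})
  (heta : nat_to_Gelf eta).

Definition MC {A : cstar R} {C : set A} (hC : comm_subalg C) (x : Fobj F A) : set (subC hC) :=
  proj1_sig (eta _ (@subC_comm _ _ _ hC) (Fmap (incl hC) x)).

Definition inM {A : cstar R} {C : set A} (hC : comm_subalg C) (x : Fobj F A) : set A :=
  [set a | exists h : C a, MC hC x (exist C a h)].

Lemma inM_max {A : cstar R} {C : set A} (hC : comm_subalg C) (x : Fobj F A) :
  is_max_ideal_of C (inM hC x).
Proof. exact: max_transfer (proj2_sig (eta _ (@subC_comm _ _ _ hC) (Fmap (incl hC) x))). Qed.

Lemma coh_sub {A : cstar R} {C D : set A} (hC : comm_subalg C) (hD : comm_subalg D)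
  (hCD : C `<=` D) (x : Fobj F A) a (h : C a) :
  MC hC x (exist C a h) <-> MC hD x (exist D a (hCD a h)).
Proof.
pose k := resf (f := chom_id A) hC hD hCD.
have E : incl hC = chom_comp (incl hD) k by apply: chom_ext.
rewrite /MC E Fmap_comp (heta _ _ _ (@subC_comm _ _ _ hD)).
exact: iff_refl.
Qed.

Lemma coh {A : cstar R} {C D : set A} (hC : comm_subalg C) (hD : comm_subalg D)
  (x : Fobj F A) a : C a -> D a -> inM hC x a -> inM hD x a.
Proof.
move=> Ca Da [h Mh].
have hI := comm_subalgI hC hD.
have s1 : C `&` D `<=` C by move=> ? [].
have s2 : C `&` D `<=` D by move=> ? [].
have hCDa : (C `&` D) a by [].
have : MC hI x (exist _ a hCDa).
  apply/(coh_sub hI hC s1); move: Mh; congr MC; exact: sval_inj.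
move/(coh_sub hI hD s2) => H; exists Da; move: H; congr MC; exact: sval_inj.
Qed.

Definition dset {A : cstar R} (x : Fobj F A) : set A :=
  [set a | exists C (hC : comm_subalg C), inM hC x a].

Lemma dsetI {A : cstar R} {C : set A} (hC : comm_subalg C) (x : Fobj F A) :
  dset x `&` C = inM hC x.
Proof.
apply/seteqP; split => a.
  move=> [[D [hD hDa]] Ca]; apply: (coh hD) => //; by case: hDa.
move=> hCa; split; first by exists C, hC.
by case: hCa.
Qed.

Lemma dset_normal {A : cstar R} (x : Fobj F A) : dset x `<=` @normal_elts _ A.
Proof. move=> a [C [hC [h _]]]; exact: comm_normal hC h. Qed.

Lemma dset_pmi {A : cstar R} (x : Fobj F A) : is_partial_max_ideal (dset x).
Proof.
split; first exact: dset_normal.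
move=> C hC; rewrite (dsetI hC); exact: inM_max.
Qed.

Definition delta (A : cstar R) (x : Fobj F A) : {I : set A | is_partial_max_ideal I} :=
  exist _ (dset x) (dset_pmi x).

Lemma nat_key {A B : cstar R} (f : chom A B) (y : Fobj F B) (C : set A)
  (hC : comm_subalg C) a (h : C a) :
  MC hC (Fmap f y) (exist C a h) <-> dset y (chom_fun f a).
Proof.
pose D := clo (img f C).
have hD : comm_subalg D := clo_comm_subalg (img_alg f hC).
have hCD : forall c, C c -> D (chom_fun f c) by move=> c hc; apply: sub_clo; exists c.
pose g := resf hC hD hCD.
have E : Fmap (incl hC) (Fmap f y) = Fmap g (Fmap (incl hD) y).
  by rewrite -!Fmap_comp -(@resf_comp _ _ _ f _ _ hC hD hCD).
rewrite /MC E (heta _ _ _ (@subC_comm _ _ _ hD)).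
split.
  move=> H; exists D, hD, (hCD a h); exact: H.
move=> H; have : (dset y `&` D) (chom_fun f a) by split => //; exact: (hCD a h).
rewrite (dsetI hD) => -[h' Mh'].
have e : exist D (chom_fun f a) h' = exist D (chom_fun f a) (hCD a h) by apply: sval_inj.
rewrite e in Mh'; exact: Mh'.
Qed.

Lemma delta_nat : nat_to_dGelf delta.
Proof.
move=> A B f y /=; apply/seteqP; split => a.
  move=> ha; split; last exact: dset_normal ha.
  move: ha => [C [hC [h Mh]]]; exact: ((nat_key f y C hC a h).1 Mh).
move=> [/= hfa na].
have [C [hC Ca]] := normal_comm na.
exists C, hC, Ca; exact: ((nat_key f y C hC a Ca).2 hfa).
Qed.

Lemma delta_eta {A : cstar R} (hA : ccommutative A) (x : Fobj F A) :
  proj1_sig (delta A x) = proj1_sig (eta _ hA x).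
Proof.
have hT := comm_subalgT hA.
rewrite /= -(setIT (dset x)) (dsetI hT); apply/seteqP; split => a.
  move=> [h]; rewrite /MC (heta _ _ _ hA) /=; by [].
move=> Ha; exists I; rewrite /MC (heta _ _ _ hA) /=; by [].
Qed.

Lemma delta_unique
  (delta' : forall A : cstar R, Fobj F A -> {I : set A | is_partial_max_ideal I}) :
  nat_to_dGelf delta' ->
  (forall (A : cstar R) (hA : ccommutative A) (x : Fobj F A),
      proj1_sig (delta' A x) = proj1_sig (eta _ hA x)) ->
  forall (A : cstar R) (x : Fobj F A), proj1_sig (delta' A x) = proj1_sig (delta A x).
Proof.
move=> hnat heq A x.
have key : forall (C : set A) (hC : comm_subalg C) a (h : C a),
    MC hC x (exist C a h) <-> proj1_sig (delta' A x) a.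
  move=> C hC a h.
  have E := hnat _ _ (incl hC) x; rewrite (heq _ (@subC_comm _ _ _ hC)) in E.
  rewrite /MC E; split; first by case.
  move=> H; split => //; rewrite /normal_elts /=; apply: sval_inj => /=.
  exact: comm_normal hC h.
apply/seteqP; split => a /=.
  move=> ha; have na := (proj2_sig (delta' A x)).1 a ha.
  have [C [hC Ca]] := normal_comm na.
  exists C, hC, Ca; exact/key.
move=> [C [hC [h Mh]]]; exact/(key C hC a h).
Qed.
End Main.

Theorem theorem5p6 (R : realType) (F : @cfunctor R)
  (eta : forall A : cstar R, ccommutative A -> Fobj F A -> {M : set A | is_max_ideal M}) :
  nat_to_Gelf eta ->
  exists delta : forall A : cstar R, Fobj F A -> {I : set A | is_partial_max_ideal I},
    [/\ nat_to_dGelf delta,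
        (forall (A : cstar R) (hA : ccommutative A) (x : Fobj F A),
            proj1_sig (delta A x) = proj1_sig (eta A hA x)) &
        (forall delta' : forall A : cstar R, Fobj F A -> {I : set A | is_partial_max_ideal I},
            nat_to_dGelf delta' ->
            (forall (A : cstar R) (hA : ccommutative A) (x : Fobj F A),
                proj1_sig (delta' A x) = proj1_sig (eta A hA x)) ->
            forall (A : cstar R) (x : Fobj F A),
              proj1_sig (delta' A x) = proj1_sig (delta A x))].
Proof.
move=> heta; exists (delta F eta heta); split.
- exact: delta_nat.
- exact: delta_eta.
- exact: delta_unique.
Qed.
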